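(* Let $n\ge2$, $d\ge 3$, $\vec r$ a weight vector and $f\in M_{\ge0}(\vec r)$ nonzero. Then the coefficient of $x_n^d$ in $f$ is zero, so $f=\sum_{j=1}^{d}x_n^{d-j}h_j(x_0,\dots,x_{n-1})$ with $h_j$ homogeneous of degree $j$; write $q=h_2$, a quadratic form in $x_0,\dots,x_{n-1}$. Let $m_0$ be the smallest integer with $m_0>\frac{2(n+1)}{d}-1$. Then $\operatorname{rank}(q)\le m_0$. If $f\in M_{>0}(\vec r)$, the same conclusion holds with $m_0$ the smallest integer with $m_0\ge\frac{2(n+1)}{d}-1$.
   Context: A weight vector is $\vec r=(r_0,\dots,r_n)\in\mathbb{Z}^{n+1}$ with $r_0\ge r_1\ge\cdots\ge r_n$, $\vec r\neq\vec 0$ and $\sum_j r_j=0$. $M_{\ge0}(\vec r)$ (resp. $M_{>0}(\vec r)$) is the set of $f=\sum a_{i_0,\dots,i_n}x_0^{i_0}\cdots x_n^{i_n}\in\mathbb{C}[x_0,\dots,x_n]_d$ such that $\sum_j r_ji_j\ge 0$ (resp. $>0$) for every $(i_0,\dots,i_n)$ with $a_{i_0,\dots,i_n}\neq0$. The rank of a quadratic form $q=\sum_{i,j}a_{ij}x_ix_j$ ($a_{ij}=a_{ji}$) is the rank of the symmetric matrix $(a_{ij})$. *)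

(* Defs.v *)
From mathcomp Require Import all_boot all_algebra.
From mathcomp Require Import reals.
From mathcomp.real_closed Require Import complex.
From mathcomp.multinomials Require Import mpoly.

Set Implicit Arguments.
Unset Strict Implicit.
Unset Printing Implicit Defensive.

Import GRing.Theory Num.Theory.
Local Open Scope ring_scope.

Definition weight_vector (n : nat) (r : 'I_n.+1 -> int) : Prop :=
  [/\ (forall i j : 'I_n.+1, (i <= j)%N -> r j <= r i),
      (exists i, r i != 0) &
      \sum_(i < n.+1) r i = 0].

Definition rweight (n : nat) (r : 'I_n.+1 -> int) (m : 'X_{1..n.+1}) : int :=
  \sum_(j < n.+1) r j * (m j)%:Z.

Definition M_ge0 (R : realType) (n d : nat) (r : 'I_n.+1 -> int)
    (f : {mpoly R[i][n.+1]}) : Prop :=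
  f \is d.-homog /\ forall m, m \in msupp f -> 0 <= rweight r m.

Definition M_gt0 (R : realType) (n d : nat) (r : 'I_n.+1 -> int)
    (f : {mpoly R[i][n.+1]}) : Prop :=
  f \is d.-homog /\ forall m, m \in msupp f -> 0 < rweight r m.

(* x_n is the last variable, x_0..x_{n-1} are the first n variables. *)
Definition restr_mnm (n : nat) (m : 'X_{1..n.+1}) : 'X_{1..n} :=
  [multinom m (widen_ord (leqnSn n) i) | i < n].

(* h_j(x_0,...,x_{n-1}) : the coefficient of x_n^{d-j} in f, i.e.
   f = sum_j x_n^{d-j} h_j. *)
Definition hpart (R : realType) (n d j : nat) (f : {mpoly R[i][n.+1]})
    : {mpoly R[i][n]} :=
  \sum_(m <- msupp f | m ord_max == (d - j)%N) f@_m *: 'X_[restr_mnm m].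

(* Symmetric matrix (a_ij) of a quadratic form q = sum_{i,j} a_ij x_i x_j. *)
Definition qf_matrix (C : fieldType) (n : nat) (q : {mpoly C[n]}) : 'M[C]_n :=
  \matrix_(i < n, j < n)
    (if i == j then q@_(U_(i) *+ 2)%MM else q@_(U_(i) + U_(j))%MM / 2%:R).

Definition qf_rank (C : fieldType) (n : nat) (q : {mpoly C[n]}) : nat :=
  \rank (qf_matrix q).

(* Main.v *)
Require Import Defs.
From mathcomp Require Import all_boot all_algebra.
From mathcomp Require Import reals.
From mathcomp.real_closed Require Import complex.
From mathcomp.multinomials Require Import mpoly.
From mathcomp Require Import all_order zify ring lra.
Import Order.TTheory GRing.Theory Num.Theory.
Local Open Scope ring_scope.

Lemma pidA_E (F : fieldType) n t (A : 'M[F]_n) i j :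
  (pid_mx t *m A) i j = if (i < t)%N then A i j else 0.
Proof.
rewrite mxE (bigD1 i) //= big1 ?addr0.
  by rewrite mxE eqxx /=; case: ifP; rewrite ?mul1r ?mul0r.
by move=> l hl; rewrite mxE (_ : (i == l :> nat) = false) ?mul0r // val_eqE eq_sym (negPf hl).
Qed.

Lemma Apid_E (F : fieldType) n s (A : 'M[F]_n) i j :
  (A *m pid_mx s) i j = if (j < s)%N then A i j else 0.
Proof.
rewrite mxE (bigD1 j) //= big1 ?addr0.
  by rewrite mxE eqxx /=; case: ifP; rewrite ?mulr1 ?mulr0.
by move=> l hl; rewrite mxE (_ : (l == j :> nat) = false) ?mulr0 // val_eqE (negPf hl).
Qed.

Lemma rank_corner (F : fieldType) n t s (A : 'M[F]_n) :
  (t <= n)%N -> (s <= n)%N ->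
  (forall i j : 'I_n, (t <= i)%N -> (s <= j)%N -> A i j = 0) ->
  (\rank A <= t + s)%N.
Proof.
move=> tn sn H.
have -> : A = pid_mx t *m A + (A - pid_mx t *m A) *m pid_mx s.
  apply/matrixP=> i j; rewrite mxE pidA_E Apid_E mxE mxE pidA_E.
  case: (ltnP i t) => hi; case: (ltnP j s) => hj //; rewrite ?subrr ?addr0 ?add0r ?subr0 //.
  by rewrite H.
apply: leq_trans (mxrank_add _ _) _; apply: leq_add.
  by apply: leq_trans (mxrankM_maxl _ _) _; rewrite rank_pid_mx.
by apply: leq_trans (mxrankM_maxr _ _) _; rewrite rank_pid_mx.
Qed.


Lemma hpart_coeff0 (R : realType) n d j (f : {mpoly R[i][n.+1]}) (mu : 'X_{1..n}) :
  (forall m, m \in msupp f -> m ord_max = (d - j)%N -> restr_mnm m = mu -> False) ->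
  (hpart d j f)@_mu = 0.
Proof.
move=> H; rewrite /hpart raddf_sum /= big_seq_cond big1 // => m /andP [hm /eqP hmax].
rewrite mcoeffZ mcoeffX; case: eqP => [e|_]; last by rewrite mulr0.
by case: (H m hm hmax e).
Qed.

Lemma rweight_2 n d (r : 'I_n.+1 -> int) (m : 'X_{1..n.+1}) (a b : 'I_n) :
  m ord_max = (d - 2)%N -> restr_mnm m = (U_(a) + U_(b))%MM ->
  rweight r m = r (widen_ord (leqnSn n) a) + r (widen_ord (leqnSn n) b)
                + (d - 2)%:Z * r ord_max.
Proof.
move=> hmax hr; rewrite /rweight big_ord_recr /= hmax mulrC; congr (_ + _).
have E : forall j : 'I_n, m (widen_ord (leqnSn n) j) = ((a == j) + (b == j))%N.
  by move=> j; rewrite -(mnmE (fun i : 'I_n => m (widen_ord (leqnSn n) i)) j) -/(restr_mnm m) hr mnmDE !mnm1E.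
under eq_bigr => j _ do rewrite E PoszD mulrDr.
rewrite big_split /=; congr (_ + _).
  rewrite (bigD1 a) //= eqxx mulr1 big1 ?addr0 // => j hj.
  by rewrite eq_sym (negPf hj) mulr0.
rewrite (bigD1 b) //= eqxx mulr1 big1 ?addr0 // => j hj.
by rewrite eq_sym (negPf hj) mulr0.
Qed.


Lemma antidiag_core (n d k : nat) (s : nat -> int) (e : int) :
  (forall i j, (i <= j <= n)%N -> s j <= s i) ->
  \sum_(0 <= i < n.+1) s i = 0 -> (k <= n)%N ->
  (forall t, (t < k)%N -> e <= s t + s (k.-1 - t)%N + (d - 2)%:Z * s n) ->
  k%:Z * e + k%:Z * (d - 2)%:Z * (- s n) <= 2 * (n.+1 - k)%:Z * (- s n).
Proof.
move=> mono sum0 kn H.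
set S1 := \sum_(0 <= t < k) s t.
have h1 : \sum_(0 <= t < k) e <= S1 + S1 + k%:Z * (d - 2)%:Z * s n.
  apply: le_trans (ler_sum_nat (G := fun t => s t + s (k.-1 - t)%N + (d - 2)%:Z * s n) _) _.
    by move=> t /andP [_ ht]; exact: H.
  rewrite !big_split /= sumr_const_nat subn0 -mulr_natl mulrA natz.
  suff -> : \sum_(0 <= i < k) s (k.-1 - i)%N = S1 by [].
  rewrite big_nat_rev /= add0n; apply: eq_big_nat => t /andP [_ ht]; congr s; lia.
rewrite sumr_const_nat subn0 -mulr_natl in h1.
have h2 : S1 + \sum_(k <= i < n.+1) s i = 0 by rewrite -big_cat_nat //; lia.
have h3 : \sum_(k <= i < n.+1) s n <= \sum_(k <= i < n.+1) s i.
  by apply: ler_sum_nat => i /andP [hi1 hi2]; apply: mono; lia.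
rewrite sumr_const_nat -mulr_natl in h3.
rewrite -!natz in h1 h3 *.
nia.
Qed.


Lemma q_gt (n d K0 : nat) : (0 < d)%N ->
  ((Posz K0)%:Q > (2 * n.+1)%:R / d%:R - 1) -> (2 * n.+1 < K0.+1 * d)%N.
Proof.
move=> d0 h; rewrite ltrBlDr ltr_pdivrMr ?ltr0n // in h.
by move: h; rewrite (_ : (Posz K0)%:~R = K0%:R :> rat) // natr1 -!natrM ltr_nat.
Qed.

Lemma q_ge (n d K0 : nat) : (0 < d)%N ->
  ((Posz K0)%:Q >= (2 * n.+1)%:R / d%:R - 1) -> (2 * n.+1 <= K0.+1 * d)%N.
Proof.
move=> d0 h; rewrite lerBlDr ler_pdivrMr ?ltr0n // in h.
by move: h; rewrite (_ : (Posz K0)%:~R = K0%:R :> rat) // natr1 -!natrM ler_nat.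
Qed.

Lemma q_neg (n d : nat) (m0 : int) : (0 < d)%N ->
  (m0%:Q >= (2 * n.+1)%:R / d%:R - 1) -> 0 <= m0.
Proof.
move=> d0 h; have : 0 < (2 * n.+1)%:R / d%:R :> rat by rewrite divr_gt0 ?ltr0n ?muln_gt0.
move=> hp; have : (-1 : rat) < m0%:~R by lra.
case: m0 {h} => // k; rewrite NegzE mulrNz ltrN2 -[1]/(1%:R) ltr_nat; lia.
Qed.


Lemma fin0 (n d k : nat) (rho : int) : (0 < rho) -> (k <= n)%N ->
  k%:Z * 0 + k%:Z * (d - 2)%:Z * rho <= 2 * (n.+1 - k)%:Z * rho -> (k * d <= 2 * n.+1)%N.
Proof. move=> *; nia. Qed.

Lemma fin1 (n d k : nat) (rho : int) : (0 < rho) -> (k <= n)%N -> (0 < k)%N ->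
  k%:Z * 1 + k%:Z * (d - 2)%:Z * rho <= 2 * (n.+1 - k)%:Z * rho -> (k * d < 2 * n.+1)%N.
Proof. move=> *; nia. Qed.


Lemma rank_bound (F : fieldType) n (A : 'M[F]_n) (s : nat -> int) (c e : int) K0 :
  (forall i j, (i <= j <= n)%N -> s j <= s i) -> (K0 < n)%N ->
  (forall a b : 'I_n, A a b != 0 -> e <= s a + s b + c) ->
  ~ (forall t, (t < K0.+1)%N -> e <= s t + s (K0 - t)%N + c) ->
  (\rank A <= K0)%N.
Proof.
move=> mono hK hA hnot.
have [t ht hlt] : exists2 t, (t < K0.+1)%N & s t + s (K0 - t)%N + c < e.
  case: (boolP [exists t : 'I_K0.+1, s t + s (K0 - t)%N + c < e]).
    by move/existsP=> [t ht]; exists t.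
  move=> hn; exfalso; apply: hnot => t ht.
  move/existsPn: hn => /(_ (Ordinal ht)) /=; by rewrite -leNgt.
have -> : K0 = (t + (K0 - t))%N by lia.
apply: rank_corner; [lia | lia |] => i j hi hj.
apply/eqP; apply: contraT => /hA h.
have := ltn_ord i; have := ltn_ord j => oj oi.
have h1 : s i <= s t by apply: mono; lia.
have h2 : s j <= s (K0 - t)%N by apply: mono; lia.
have : e < e by apply: (le_lt_trans h); apply: le_lt_trans hlt; rewrite lerD2r lerD.
by rewrite ltxx.
Qed.

Lemma entry_bound (R : realType) n d (r : 'I_n.+1 -> int) (f : {mpoly R[i][n.+1]})
  (e : int) (hw : forall m, m \in msupp f -> e <= rweight r m) (a b : 'I_n) :
  (qf_matrix (hpart d 2 f)) a b != 0 ->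
  e <= r (widen_ord (leqnSn n) a) + r (widen_ord (leqnSn n) b) + (d - 2)%:Z * r ord_max.
Proof.
move=> hne; case: (lerP e _) => // hlt; exfalso; move: hne; rewrite mxE.
have H : forall (a b : 'I_n) mu, mu = (U_(a) + U_(b))%MM ->
   e > r (widen_ord (leqnSn n) a) + r (widen_ord (leqnSn n) b) + (d - 2)%:Z * r ord_max ->
   (hpart d 2 f)@_mu = 0.
  move=> a' b' mu -> hl; apply: hpart_coeff0 => m hm hmax hr.
  by have := hw m hm; rewrite (@rweight_2 _ _ r _ _ _ hmax hr) leNgt hl.
case: ifP => [/eqP eab|_].
  rewrite (_ : (U_(a) *+ 2)%MM = (U_(a) + U_(a))%MM).
    by subst b; rewrite (H a a) ?eqxx.
  by apply/mnmP => j; rewrite mulmnE.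
by rewrite (H a b) ?mul0r ?eqxx.
Qed.

Theorem lemma5p1 (R : realType) (n d : nat) (r : 'I_n.+1 -> int)
    (f : {mpoly R[i][n.+1]}) :
  (2 <= n)%N -> (3 <= d)%N -> weight_vector r ->
  M_ge0 d r f -> f != 0 ->
  [/\ f@_(U_(ord_max) *+ d)%MM = 0,
      (forall m0 : int,
         (* m0 = smallest integer with m0 > 2(n+1)/d - 1 *)
         (m0%:Q > (2 * n.+1)%:R / d%:R - 1) ->
         ((m0 - 1)%:Q <= (2 * n.+1)%:R / d%:R - 1) ->
         (qf_rank (hpart d 2 f) : int) <= m0) &
      (M_gt0 d r f ->
       forall m0 : int,
         (* m0 = smallest integer with m0 >= 2(n+1)/d - 1 *)
         (m0%:Q >= (2 * n.+1)%:R / d%:R - 1) ->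
         ((m0 - 1)%:Q < (2 * n.+1)%:R / d%:R - 1) ->
         (qf_rank (hpart d 2 f) : int) <= m0)].
Proof.
move=> hn hd [mono_r [i0 hi0] sum_r] [hom hsupp] fnz.
pose s : nat -> int := fun j => r (inord j).
have sE : forall j : 'I_n.+1, s j = r j by move=> j; rewrite /s inord_val.
have sW : forall j : 'I_n, s j = r (widen_ord (leqnSn n) j).
  by move=> j; rewrite -sE.
have sn : s n = r ord_max by rewrite -sE.
have monos : forall i j, (i <= j <= n)%N -> s j <= s i.
  move=> i j /andP [hij hjn]; rewrite /s; apply: mono_r; rewrite !inordK //; lia.
have rn_neg : r ord_max < 0.
  rewrite ltNge; apply/negP => h0; move/negP: hi0; apply; apply/eqP.
  apply: (psumr_eq0P _ sum_r) => // j _; apply: le_trans h0 _; apply: mono_r.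
  by rewrite -ltnS.
have sum_s : \sum_(0 <= i < n.+1) s i = 0.
  by rewrite big_mkord (eq_bigr _ (fun j _ => sE j)).
have d0 : (0 < d)%N by lia.
have rankP : forall (e : int) K0, (forall m, m \in msupp f -> e <= rweight r m) ->
    (K0 < n)%N ->
    ~ (forall t, (t < K0.+1)%N -> e <= s t + s (K0 - t)%N + (d - 2)%:Z * s n) ->
    (qf_rank (hpart d 2 f) <= K0)%N.
  move=> e K0 hw hK hnot; rewrite /qf_rank; apply: (@rank_bound _ _ _ s _ e _ monos hK _ hnot) => a b hab.
  by rewrite !sW sn; apply: entry_bound hab.
split.
- apply/eqP; apply: contraT => h.
  have hm : (U_(ord_max) *+ d)%MM \in msupp f by rewrite mcoeff_msupp.
  have := hsupp _ hm.
  rewrite /rweight big_ord_recr /= big1 => [|j _].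
    rewrite add0r mulmnE mnm1E eqxx mul1n => hw; nia.
  rewrite mulmnE mnm1E (_ : (ord_max == widen_ord (leqnSn n) j) = false) ?mul0n ?mulr0 //.
  by apply/negbTE; rewrite -val_eqE /= neq_ltn ltn_ord orbT.
- move=> m0 h1 h2.
  have := q_neg _ _ _ d0 (ltW h1); case: m0 h1 h2 => [K0|//] h1 _ _.
  have hq := q_gt _ _ _ d0 h1.
  rewrite lez_nat; case: (ltnP K0 n) => hK; last first.
    by apply: leq_trans (rank_leq_row _) hK.
  apply: (rankP 0) => // Hall.
  have := antidiag_core _ _ K0.+1 s _ monos sum_s hK Hall.
  move=> H; have := fin0 _ _ _ _ (_ : 0 < - s n) hK H; rewrite sn oppr_gt0 => /(_ rn_neg); lia.
- move=> [_ hgt] m0 h1 h2.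
  have := q_neg _ _ _ d0 h1; case: m0 h1 h2 => [K0|//] h1 _ _.
  have hq := q_ge _ _ _ d0 h1.
  rewrite lez_nat; case: (ltnP K0 n) => hK; last first.
    by apply: leq_trans (rank_leq_row _) hK.
  apply: (rankP 1) => [m hm|//|Hall]; first by have := hgt m hm; lia.
  have := antidiag_core _ _ K0.+1 s _ monos sum_s hK Hall.
  move=> H; have := fin1 _ _ _ _ (_ : 0 < - s n) hK (ltn0Sn K0) H; rewrite sn oppr_gt0 => /(_ rn_neg); lia.
Qed.
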